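(* Let $F$ be a pseudo-Boolean formula and let $(\mathcal{C},\mathcal{D},\mathcal{O},\mathcal{S},\vec z,\vec a)$ be a configuration satisfying the standing invariants below that is weakly $F$-valid. Suppose that a PB constraint $C$ and a substitution $\omega$ satisfy: $C$ contains no variable of $\vec a$; no variable is mapped by $\omega$ to a literal over a variable of $\vec a$; and there is a cutting planes derivation $\mathcal{C}\cup\mathcal{D}\cup\{\neg C\}\cup\mathcal{S}(\vec z{\upharpoonright}_\omega,\vec z,\vec a)\vdash(\mathcal{C}\cup\mathcal{D}\cup\{C\}){\upharpoonright}_\omega\cup\mathcal{O}(\vec z{\upharpoonright}_\omega,\vec z,\vec a)$ (i.e., the transition to $(\mathcal{C},\mathcal{D}\cup\{C\},\mathcal{O},\mathcal{S},\vec z,\vec a)$ is a valid application of the redundance rule). Then $(\mathcal{C},\mathcal{D}\cup\{C\},\mathcal{O},\mathcal{S},\vec z,\vec a)$ is also weakly $F$-valid.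
   Context: A literal is $x$ or $\bar x=1-x$; a PB constraint is $\sum_i a_i\ell_i\ge A$ with negation $\neg C\doteq\sum_i a_i\bar\ell_i\ge\sum_i a_i-A+1$; formulas are sets of PB constraints; $\vdash$ is cutting planes derivability (sound). Substitutions $\omega$ map variables to $0,1$ or literals, with $\omega(\bar x)=\overline{\omega(x)}$, $\mathrm{supp}(\omega)=\{x:\omega(x)\ne x\}$, $F{\upharpoonright}_\omega$ the result of applying $\omega$ to each literal of each constraint, $\vec z{\upharpoonright}_\omega=\omega(z_1),\dots,\omega(z_n)$, $(\alpha\circ\omega)(x)=\alpha(\omega(x))$. A formula $\mathcal{S}(\vec x,\vec a)=\{C_1,\dots,C_m\}$ is a specification over $\vec a$ if there are substitutions $\omega_i$ with $\mathrm{supp}(\omega_i)\subseteq\vec a$ such that $\{C_1,\dots,C_{i-1},\neg C_i\}\vdash\{C_1{\upharpoonright}_{\omega_i},\dots,C_i{\upharpoonright}_{\omega_i}\}$ for each $i$. Given formulas $\mathcal{O}(\vec u,\vec v,\vec a)$, $\mathcal{S}(\vec u,\vec v,\vec a)$ ($\vec u,\vec v$ of length $n$) and a list $\vec z$ of $n$ variables, $\alpha\preceq\beta$ holds iff there is an assignment $\rho$ to $\vec a$ with $\mathcal{S}(\vec z{\upharpoonright}_\alpha,\vec z{\upharpoonright}_\beta,\vec a{\upharpoonright}_\rho)\wedge\mathcal{O}(\vec z{\upharpoonright}_\alpha,\vec z{\upharpoonright}_\beta,\vec a{\upharpoonright}_\rho)$ true. A configuration is a tuple $(\mathcal{C},\mathcal{D},\mathcal{O},\mathcal{S},\vec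 z,\vec a)$ of formulas $\mathcal{C}$ (core), $\mathcal{D}$ (derived), $\mathcal{O},\mathcal{S}$ and disjoint variable lists $\vec z,\vec a$, satisfying the standing invariants: (1) there are cutting planes derivations $\mathcal{S}(\vec x,\vec x,\vec a)\vdash\mathcal{O}(\vec x,\vec x,\vec a)$ and $\mathcal{S}(\vec x,\vec y,\vec a)\cup\mathcal{O}(\vec x,\vec y,\vec a)\cup\mathcal{S}(\vec y,\vec z',\vec b)\cup\mathcal{O}(\vec y,\vec z',\vec b)\cup\mathcal{S}(\vec x,\vec z',\vec c)\vdash\mathcal{O}(\vec x,\vec z',\vec c)$ for fresh variable lists; (2) $\mathcal{S}$ is a specification over $\vec a$; (3) the variables of $\vec a$ occur only in $\mathcal{O}$ and $\mathcal{S}$ and are disjoint from $\vec z$. Assignments satisfying $\mathcal{C}\cup\mathcal{D}$ are total assignments to the non-auxiliary variables (they do not assign $\vec a$). The configuration is weakly $F$-valid if (1) if $F$ is satisfiable then $\mathcal{C}$ is satisfiable, and (2) for every assignment $\alpha$ satisfying $\mathcal{C}$ there is an assignment $\alpha'$ satisfying $\mathcal{C}\cup\mathcal{D}$ with $\alpha'\preceq\alpha$. *)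

(* Defs.v *)
From Stdlib Require List.
From mathcomp Require Import all_boot all_order all_algebra.
Set Implicit Arguments. Unset Strict Implicit. Unset Printing Implicit Defensive.
Import Order.TTheory GRing.Theory Num.Theory.
Local Open Scope ring_scope.

Inductive lit (V : Type) := Pos of V | Neg of V.
Arguments Pos {V}. Arguments Neg {V}.

Definition litvar V (l : lit V) : V := match l with Pos x | Neg x => x end.
Definition neglit V (l : lit V) : lit V :=
  match l with Pos x => Neg x | Neg x => Pos x end.

(* sum_i a_i l_i >= deg *)
Record constr (V : Type) := Constr { terms : seq (int * lit V); deg : int }.
Arguments Constr {V}.

Definition formula (V : Type) := seq (constr V).

Definition litval V (al : V -> bool) (l : lit V) : int :=
  match l with Pos x => (al x : nat)%:Z | Neg x => (~~ al x : nat)%:Z end.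
Definition lhs V (al : V -> bool) (C : constr V) : int :=
  \sum_(t <- terms C) t.1 * litval al t.2.
Definition satc V (al : V -> bool) (C : constr V) : bool := deg C <= lhs al C.
Definition satf V (al : V -> bool) (F : formula V) : bool := all (satc al) F.

Definition negc V (C : constr V) : constr V :=
  Constr [seq (t.1, neglit t.2) | t <- terms C]
         ((\sum_(t <- terms C) t.1) - deg C + 1).

Inductive cp (V : Type) (F : formula V) : constr V -> Prop :=
| cp_axiom C : List.In C F -> cp F C
| cp_litax (l : lit V) : cp F (Constr [:: (1, l)] 0)
| cp_add C1 C2 : cp F C1 -> cp F C2 ->
    cp F (Constr (terms C1 ++ terms C2) (deg C1 + deg C2))
| cp_mul (c : int) C : 0 < c -> cp F C ->
    cp F (Constr [seq (c * t.1, t.2) | t <- terms C] (c * deg C))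
| cp_div (d : int) C : 0 < d -> all (fun t => (d %| t.1)%Z) (terms C) -> cp F C ->
    cp F (Constr [seq ((t.1 %/ d)%Z, t.2) | t <- terms C] (- ((- deg C) %/ d)%Z))
(* normalisation: rewriting into a constraint with the same affine function
   (merging terms, x + ~x = 1, dropping zero terms, moving constants) *)
| cp_norm C C' : cp F C -> (forall al : V -> bool, lhs al C' - deg C' = lhs al C - deg C) ->
    cp F C'.

Definition derives V (F G : formula V) : Prop := forall C, List.In C G -> cp F C.

Inductive blit (V : Type) := BConst of bool | BLit of lit V.
Arguments BConst {V}. Arguments BLit {V}.

Definition negblit V (b : blit V) : blit V :=
  match b with BConst c => BConst (~~ c) | BLit l => BLit (neglit l) end.
Definition pv V (x : V) : blit V := BLit (Pos x).

Definition subst_lit V W (w : V -> blit W) (l : lit V) : blit W :=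
  match l with Pos x => w x | Neg x => negblit (w x) end.

(* C|_omega : literals mapped to constants are moved into the degree *)
Definition substc V W (w : V -> blit W) (C : constr V) : constr W :=
  Constr (flatten [seq match subst_lit w t.2 with
                       | BLit l => [:: (t.1, l)] | BConst _ => [::] end
                  | t <- terms C])
         (deg C - \sum_(t <- terms C) match subst_lit w t.2 with
                                     | BConst b => t.1 * (b : nat)%:Z
                                     | BLit _ => 0 end).
Definition substf V W (w : V -> blit W) (F : formula V) : formula W :=
  map (substc w) F.

(* template variables: inl (inl i) = u_i, inl (inr i) = v_i, inr j = a_j *)
Definition tvar (n m : nat) := (('I_n + 'I_n) + 'I_m)%type.

Definition is_aux n m (t : tvar n m) : bool :=
  match t with inr _ => true | inl _ => false end.

Definition inst n m V (x y : 'I_n -> blit V) (b : 'I_m -> blit V)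
  (t : tvar n m) : blit V :=
  match t with inl (inl i) => x i | inl (inr i) => y i | inr j => b j end.

Definition templ n m V (T : formula (tvar n m)) (x y : 'I_n -> blit V)
  (b : 'I_m -> blit V) : formula V := substf (inst x y b) T.

Definition is_spec n m (S : formula (tvar n m)) : Prop :=
  forall i, (i < size S)%N ->
    exists w : tvar n m -> blit (tvar n m),
      (forall t, w t <> BLit (Pos t) -> is_aux t) /\
      derives (rcons (take i S) (negc (nth (Constr [::] 0) S i)))
              (substf w (take i.+1 S)).

(* standing invariant (1), with fresh variable lists *)
Definition inv_refl n m (O S : formula (tvar n m)) : Prop :=
  let X := fun i : 'I_n => pv (inl i : 'I_n + 'I_m) in
  let B := fun j : 'I_m => pv (inr j : 'I_n + 'I_m) in
  derives (templ S X X B) (templ O X X B).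

Definition fv6 (n m : nat) := ((('I_n + 'I_n) + 'I_n) + (('I_m + 'I_m) + 'I_m))%type.

Definition inv_trans n m (O S : formula (tvar n m)) : Prop :=
  let X  := fun i : 'I_n => pv (inl (inl (inl i)) : fv6 n m) in
  let Y  := fun i : 'I_n => pv (inl (inl (inr i)) : fv6 n m) in
  let Z' := fun i : 'I_n => pv (inl (inr i) : fv6 n m) in
  let B  := fun j : 'I_m => pv (inr (inl (inl j)) : fv6 n m) in
  let B' := fun j : 'I_m => pv (inr (inl (inr j)) : fv6 n m) in
  let Cc := fun j : 'I_m => pv (inr (inr j) : fv6 n m) in
  derives (templ S X Y B ++ templ O X Y B ++ templ S Y Z' B' ++ templ O Y Z' B'
           ++ templ S X Z' Cc)
          (templ O X Z' Cc).

Definition prec n m (O S : formula (tvar n m)) (z : 'I_n -> nat)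
  (al be : nat -> bool) : Prop :=
  exists rho : 'I_m -> bool,
    satf (fun t : tvar n m => match t with
                              | inl (inl i) => al (z i)
                              | inl (inr i) => be (z i)
                              | inr j => rho j end) (S ++ O).

Definition occurs (x : nat) (F : formula nat) : bool :=
  has (fun C => has (fun t => litvar t.2 == x) (terms C)) F.

Definition config n m (Cc Dd : formula nat) (O S : formula (tvar n m))
  (z : 'I_n -> nat) (a : 'I_m -> nat) : Prop :=
  [/\ inv_refl O S /\ inv_trans O S, is_spec S,
      injective a,
      (forall i j, z i <> a j) &
      (forall j, ~~ occurs (a j) (Cc ++ Dd))].

Definition weakly_valid n m (F Cc Dd : formula nat) (O S : formula (tvar n m))
  (z : 'I_n -> nat) : Prop :=
  ((exists al, satf al F) -> exists al, satf al Cc) /\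
  (forall al, satf al Cc ->
     exists al', satf al' (Cc ++ Dd) /\ prec O S z al' al).

Definition redundance_step n m (Cc Dd : formula nat) (O S : formula (tvar n m))
  (z : 'I_n -> nat) (a : 'I_m -> nat) (C : constr nat) (w : nat -> blit nat) : Prop :=
  let Zw := fun i => w (z i) in
  let Z  := fun i => pv (z i) in
  let A  := fun j => pv (a j) in
  derives (Cc ++ Dd ++ [:: negc C] ++ templ S Zw Z A)
          (substf w (Cc ++ Dd ++ [:: C]) ++ templ O Zw Z A).

(* Main.v *)
Require Import Defs.
From mathcomp Require Import all_boot all_order all_algebra.
From Stdlib Require Import Classical.
From mathcomp Require Import zify ring.
Set Implicit Arguments. Unset Strict Implicit. Unset Printing Implicit Defensive.
Import Order.TTheory GRing.Theory Num.Theory.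
Local Open Scope ring_scope.

Definition evl V (al : V -> bool) (l : lit V) : bool :=
  match l with Pos x => al x | Neg x => ~~ al x end.
Definition evb V (al : V -> bool) (b : blit V) : bool :=
  match b with BConst c => c | BLit l => evl al l end.

Lemma litvalE V (al : V -> bool) l : litval al l = (evl al l : nat)%:Z.
Proof. by case: l. Qed.

Lemma lhs_cat V (al : V -> bool) s1 s2 d1 d2 d :
  lhs al (Constr (s1 ++ s2) d) = lhs al (Constr s1 d1) + lhs al (Constr s2 d2).
Proof. by rewrite /lhs /= big_cat. Qed.

Lemma litval_ge0 V (al : V -> bool) l : 0 <= litval al l.
Proof. by case: l. Qed.

Lemma sound V (F : formula V) C al : cp F C -> satf al F -> satc al C.
Proof.
move=> H sF; elim: H.
- move=> C0 HI; have [l1 [l2 E]] := List.in_split _ _ HI; subst F.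
  by move: sF; rewrite /satf all_cat /= => /and3P[].
- by move=> l; rewrite /satc /lhs /= big_seq1 mul1r litval_ge0.
- move=> C1 C2 _ h1 _ h2; rewrite /satc /= (lhs_cat _ _ _ 0 0).
  by rewrite lerD.
- move=> c C0 c0 _ h; rewrite /satc /lhs /= big_map.
  under eq_bigr do rewrite -mulrA.
  by rewrite -mulr_sumr ler_pM2l.
- move=> d C0 d0 hd _ h; rewrite /satc /lhs /= big_map.
  have E : (\sum_(t <- terms C0) (t.1 %/ d)%Z * litval al t.2) * d = lhs al C0.
    rewrite mulr_suml /lhs; elim: (terms C0) hd => [|t s IH] /=; first by rewrite !big_nil.
    case/andP=> ht hs; rewrite !big_cons IH // mulrAC divzK //.
  rewrite lerNl lez_divRL // mulNr lerN2 /= E; exact: h.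
- move=> C0 C' _ h E; rewrite /satc -subr_ge0 E subr_ge0; exact: h.
Qed.

Lemma derives_sound V (F G : formula V) al : derives F G -> satf al F -> satf al G.
Proof.
move=> D sF; elim: G D => //= C0 G IH D; apply/andP; split.
  by apply: (sound (D C0 _) sF); left.
by apply: IH => C1 HC; apply: D; right.
Qed.
Lemma evb_subst V W (g : W -> bool) (w : V -> blit W) l :
  evb g (subst_lit w l) = evl (fun x => evb g (w x)) l.
Proof.
case: l => x //=; case: (w x) => [c|[y|y]] //=; by rewrite negbK.
Qed.

Lemma lhs_substc V W (g : W -> bool) (w : V -> blit W) C :
  lhs g (substc w C) - deg (substc w C) = lhs (fun x => evb g (w x)) C - deg C.
Proof.
rewrite /substc /lhs /=.
suff E : forall s : seq (int * lit V),
  \sum_(t <- flatten [seq match subst_lit w t.2 with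
                       | BLit l => [:: (t.1, l)] | BConst _ => [::] end | t <- s])
     t.1 * litval g t.2 +
  \sum_(t <- s) match subst_lit w t.2 with
                | BConst b => t.1 * (b : nat)%:Z | BLit _ => 0 end =
  \sum_(t <- s) t.1 * litval (fun x => evb g (w x)) t.2.
  rewrite -E; move: (\sum_(t <- _) _) (\sum_(t <- _) _) (deg C) => x y z.
  by rewrite opprB addrA.
elim=> [|t s IH]; first by rewrite !big_nil addr0.
rewrite /= big_cat !big_cons -IH.
move: (\sum_(t0 <- flatten _) _) (\sum_(j <- s) _) => A B.
rewrite litvalE -evb_subst.
case: (subst_lit w t.2) => [c|l] /=.
  by rewrite big_nil /= !add0r addrCA.
by rewrite big_seq1 /= add0r litvalE addrA.
Qed.

Lemma satc_substc V W (g : W -> bool) (w : V -> blit W) C :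
  satc g (substc w C) = satc (fun x => evb g (w x)) C.
Proof. by rewrite /satc -[deg (substc _ _) <= _]subr_ge0 -[deg C <= _]subr_ge0 lhs_substc. Qed.

Lemma satf_substf V W (g : W -> bool) (w : V -> blit W) F :
  satf g (substf w F) = satf (fun x => evb g (w x)) F.
Proof. by elim: F => //= C F IH; rewrite satc_substc IH. Qed.

Lemma satc_negc V (al : V -> bool) C : satc al (negc C) = ~~ satc al C.
Proof.
rewrite /satc /lhs /= big_map.
have -> : \sum_(t <- terms C) t.1 * litval al (neglit t.2) =
          \sum_(t <- terms C) t.1 - \sum_(t <- terms C) t.1 * litval al t.2.
  elim: (terms C) => [|t s IH]; first by rewrite !big_nil subr0.
  rewrite !big_cons IH.
  have -> : litval al (neglit t.2) = 1 - litval al t.2 by case: t.2 => x /=; case: (al x).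
  ring.
set A := \sum_(j <- _) j.1; set B := \sum_(j <- _) _.
rewrite -ltNge; apply/idP/idP => H; lia.
Qed.
Lemma satf_ext V (f g : V -> bool) F : f =1 g -> satf f F = satf g F.
Proof.
move=> E; elim: F => //= C F ->; congr andb; rewrite /satc /lhs.
by congr (_ <= _); apply: eq_bigr => t _; rewrite !litvalE; case: t.2 => x /=; rewrite E.
Qed.

Lemma satf_occ (f g : nat -> bool) F :
  (forall x, occurs x F -> f x = g x) -> satf f F = satf g F.
Proof.
elim: F => //= C F IH H; rewrite IH; last by move=> x hx; apply: H; apply/orP; right.
congr andb; rewrite /satc /lhs; congr (_ <= _).
have: forall x, has (fun t => litvar t.2 == x) (terms C) -> f x = g x.
  by move=> x hx; apply: H; apply/orP; left.
elim: (terms C) => [|t s IHs] Hs; first by rewrite !big_nil.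
rewrite !big_cons IHs; last by move=> x hx; apply: Hs; rewrite /= hx orbT.
have E: f (litvar t.2) = g (litvar t.2) by apply: Hs; rewrite /= eqxx.
by rewrite !litvalE; case: t.2 E => x /= ->.
Qed.

Definition extr n m (be : tvar n m -> bool) (rho : 'I_m -> bool) (t : tvar n m) : bool :=
  match t with inr j => rho j | _ => be t end.

Lemma spec_ok n m (S : formula (tvar n m)) (be : tvar n m -> bool) :
  is_spec S -> exists rho, satf (extr be rho) S.
Proof.
move=> HS.
suff: forall i, (i <= size S)%N -> exists rho, satf (extr be rho) (take i S).
  by move/(_ (size S) (leqnn _)); rewrite take_size.
elim=> [|i IH] hi; first by exists (fun _ => false); rewrite take0.
have [rho Hr] := IH (ltnW hi).
rewrite (take_nth (Constr [::] 0) hi).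
set c := nth _ S i.
case hc: (satc (extr be rho) c).
  by exists rho; rewrite /satf all_rcons /= hc.
have [w [Hw D]] := HS i hi.
have := derives_sound D (al := extr be rho).
rewrite /satf all_rcons satc_negc hc /=; move/(_ Hr).
rewrite -/(satf _ _) satf_substf (take_nth (Constr [::] 0) hi) => H.
exists (fun j => evb (extr be rho) (w (inr j))).
suff E : (fun x => evb (extr be rho) (w x)) =1 extr be (fun j => evb (extr be rho) (w (inr j))).
  by move: H; rewrite (satf_ext _ E).
case=> [u|j] //=.
destruct (classic (w (inl u) = BLit (Pos (inl u)))) as [E|E]; first by rewrite E.
by have := Hw _ E.
Qed.
Definition pf n m (z : 'I_n -> nat) (al be : nat -> bool) (rho : 'I_m -> bool)
  (t : tvar n m) : bool :=
  match t with inl (inl i) => al (z i) | inl (inr i) => be (z i) | inr j => rho j end.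

Lemma templ_pf n m V (g : V -> bool) (T : formula (tvar n m)) X Y B f :
  (forall i, evb g (X i) = f (inl (inl i))) -> (forall i, evb g (Y i) = f (inl (inr i))) ->
  (forall j, evb g (B j) = f (inr j)) -> satf g (templ T X Y B) = satf f T.
Proof.
by move=> hX hY hB; rewrite /templ satf_substf; apply: satf_ext; case=> [[i|i]|j] /=.
Qed.

Lemma satf_cat V (g : V -> bool) F G : satf g (F ++ G) = satf g F && satf g G.
Proof. exact: all_cat. Qed.

Lemma prec_trans n m (O S : formula (tvar n m)) z a1 a2 a3 :
  inv_trans O S -> is_spec S -> prec O S z a1 a2 -> prec O S z a2 a3 -> prec O S z a1 a3.
Proof.
move=> T Sp [r1 H1] [r2 H2].
have [r3 H3] := spec_ok (pf z a1 a3 (fun _ => false)) Sp.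
have H3' : satf (pf z a1 a3 r3) S by move: H3; rewrite (satf_ext _ (g := pf z a1 a3 r3)) //; case=> [[i|i]|j].
exists r3.
move: H1 H2; rewrite !satf_cat.
move=> /andP[S1 O1] /andP[S2 O2].
apply/andP; split; first exact: H3'.
pose X  := fun i : 'I_n => pv (inl (inl (inl i)) : fv6 n m).
pose Y  := fun i : 'I_n => pv (inl (inl (inr i)) : fv6 n m).
pose Z' := fun i : 'I_n => pv (inl (inr i) : fv6 n m).
pose B  := fun j : 'I_m => pv (inr (inl (inl j)) : fv6 n m).
pose B' := fun j : 'I_m => pv (inr (inl (inr j)) : fv6 n m).
pose Cc := fun j : 'I_m => pv (inr (inr j) : fv6 n m).
pose d : fv6 n m -> bool := fun v => match v with
  | inl (inl (inl i)) => a1 (z i) | inl (inl (inr i)) => a2 (z i)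
  | inl (inr i) => a3 (z i) | inr (inl (inl j)) => r1 j
  | inr (inl (inr j)) => r2 j | inr (inr j) => r3 j end.
have K : satf d (templ S X Y B ++ templ O X Y B ++ templ S Y Z' B' ++ templ O Y Z' B'
           ++ templ S X Z' Cc) -> satf d (templ O X Z' Cc) := derives_sound T.
rewrite !satf_cat in K.
rewrite -(@templ_pf n m _ d O X Z' Cc) //; apply: K.
rewrite (@templ_pf n m _ d S X Y B (pf z a1 a2 r1)) // (@templ_pf n m _ d O X Y B (pf z a1 a2 r1)) //.
rewrite (@templ_pf n m _ d S Y Z' B' (pf z a2 a3 r2)) // (@templ_pf n m _ d O Y Z' B' (pf z a2 a3 r2)) //.
rewrite (@templ_pf n m _ d S X Z' Cc (pf z a1 a3 r3)) //.
by rewrite S1 O1 S2 O2 H3'.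
Qed.
Unset Implicit Arguments.
Local Close Scope ring_scope.

Theorem lemma5 (F : formula nat) (n m : nat) (Cc Dd : formula nat)
  (O S : formula (tvar n m)) (z : 'I_n -> nat) (a : 'I_m -> nat)
  (C : constr nat) (w : nat -> blit nat) :
  config Cc Dd O S z a ->
  weakly_valid F Cc Dd O S z ->
  (forall j, ~~ occurs (a j) [:: C]) ->
  (forall x l, w x = BLit l -> forall j, litvar l <> a j) ->
  redundance_step Cc Dd O S z a C w ->
  weakly_valid F Cc (Dd ++ [:: C]) O S z.
Proof.
move=> [[Irefl Itrans] Sp ainj zna anoc] [W1 W2] Cna wna R.
split; first exact: W1.
move=> al sal; have [al' [s' P']] := W2 al sal.
case hC: (satc al' C).
  exists al'; split => //; move: s'; rewrite !satf_cat => /andP[-> ->] /=.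
  by rewrite hC.
pose tau (t : tvar n m) := match t with inl (inl i) => evb al' (w (z i))
  | inl (inr i) => al' (z i) | inr _ => false end.
have [rho Hr] := spec_ok tau Sp.
pose g x := if [pick j | a j == x] is Some j then rho j else al' x.
have ga : forall j, g (a j) = rho j.
  move=> j; rewrite /g; case: pickP => [j' /eqP /ainj -> | H] //.
  by have := H j; rewrite eqxx.
have gn : forall x, (forall j, a j <> x) -> g x = al' x.
  move=> x hx; rewrite /g; case: pickP => [j /eqP e | ] //; by case: (hx j).
have gw : forall x, evb g (w x) = evb al' (w x).
  move=> x; case E: (w x) => [c|l] //=; have := wna _ _ E.
  by case: l E => y E /= Hy; rewrite gn // => j e; exact: (Hy j (esym e)).
pose Zw := fun i => w (z i). pose Z := fun i => pv (z i). pose A := fun j => pv (a j).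
have K : satf g (Cc ++ Dd ++ [:: negc C] ++ templ S Zw Z A) ->
         satf g (substf w (Cc ++ Dd ++ [:: C]) ++ templ O Zw Z A) := derives_sound R.
have sCD : satf g (Cc ++ Dd).
  rewrite (@satf_occ g al') // => x hx; apply: gn => j e.
  by move: (anoc j); rewrite e hx.
have sC : satc g (negc C).
  rewrite satc_negc.
  have : satf g [:: C] = satf al' [:: C].
    apply: satf_occ => x hx; apply: gn => j e.
    by move: (Cna j); rewrite e hx.
  by rewrite /satf /= !andbT hC => ->.
have sS : satf g (templ S Zw Z A).
  rewrite (@templ_pf n m _ g S Zw Z A (extr tau rho)) //.
  - by move=> i; exact: gw.
  - by move=> i /=; rewrite gn // => j e; exact: (zna i j (esym e)).
move: sCD; rewrite satf_cat => /andP[s1 s2].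
move: K; rewrite !satf_cat s1 s2 /= sC sS /= => /(_ isT) /andP[K1 K2].
pose al'' x := evb g (w x).
exists al''; split.
  by move: K1; rewrite satf_substf.
apply: (prec_trans Itrans Sp _ P').
exists rho; rewrite satf_cat; apply/andP; split.
  move: Hr; rewrite (satf_ext _ (g := pf z al'' al' rho)) //.
  by case=> [[i|i]|j] //=; rewrite /al'' gw.
move: K2; rewrite (@templ_pf n m _ g O Zw Z A (pf z al'' al' rho)) //.
by move=> i /=; rewrite gn // => j e; exact: (zna i j (esym e)).
Qed.
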